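(* Let $X=(X(s))_{s\in\mathbb S}$, $\mathbb S\subset\mathbb R^2$, be a stationary spatial process and let $\mathcal D_X=(\mathcal D_X(s))_{s\in\mathbb S}$ be a positive damage function of $X$. For a region $\mathcal A\subset\mathbb S$ of finite positive Lebesgue measure $|\mathcal A|$ put $$L(\mathcal A,\mathcal D_X)=\frac{1}{|\mathcal A|}\int_{\mathcal A}\mathcal D_X(s)\,\mathrm ds,\qquad \mathcal R_1(\mathcal A,\mathcal D_X)=\mathrm{Var}\big(L(\mathcal A,\mathcal D_X)\big).$$ Then: (i) (invariance by translation) for every region $\mathcal A$ and every $v\in\mathbb R^2$ with $\mathcal A+v\subset\mathbb S$, $\mathcal R_1(\mathcal A+v,\mathcal D_X)=\mathcal R_1(\mathcal A,\mathcal D_X)$; (ii) (sub-additivity) for any two disjoint regions $\mathcal A_1,\mathcal A_2\subset\mathbb S$, $\mathcal R_1(\mathcal A_1\cup\mathcal A_2,\mathcal D_X)\le \mathcal R_1(\mathcal A_1,\mathcal D_X)+\mathcal R_1(\mathcal A_2,\mathcal D_X)$.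
   Context: A damage function of $X$ is a nonnegative process obtained pointwise from $X$, i.e. $\mathcal D_X(s)=g(X(s))$ for a fixed measurable function $g$ with values in $\mathbb R_+$ (for example $g(x)=(x-u)^+$); it is assumed that $\mathcal D_X$ is jointly measurable and square integrable so that the integrals and variances above are well defined. $\mathcal A+v=\{a+v:a\in\mathcal A\}$. *)

(* Defs.v *)
From HB Require Import structures.
From mathcomp Require Import all_boot all_order all_algebra.
From mathcomp Require Import all_classical all_reals all_analysis.
Set Implicit Arguments. Unset Strict Implicit. Unset Printing Implicit Defensive.
Import Order.TTheory GRing.Theory Num.Theory.
Local Open Scope classical_set_scope.
Local Open Scope ring_scope.

Definition leb2 (R : realType) :=
  ((@lebesgue_measure R) \x (@lebesgue_measure R))%E.

Arguments leb2 R : clear implicits.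

Definition translate (R : realType) (A : set (R * R)) (v : R * R) : set (R * R) :=
  [set a + v | a in A].

(* Strict stationarity of X on S: all finite-dimensional distributions
   (determined by their values on measurable rectangles) are invariant under
   every translation v that keeps the sites inside S. *)
Definition stationary d (Omega : measurableType d) (R : realType)
  (P : probability Omega R) (S : set (R * R)) (X : R * R -> Omega -> R) : Prop :=
  forall (n : nat) (s : 'I_n -> R * R) (v : R * R) (B : 'I_n -> set R),
    (forall i, S (s i)) -> (forall i, S (s i + v)) ->
    (forall i, measurable (B i)) ->
    P (\bigcap_(i in [set: 'I_n]) [set w | B i (X (s i + v) w)]) =
    P (\bigcap_(i in [set: 'I_n]) [set w | B i (X (s i) w)]).

Definition region (R : realType) (S A : set (R * R)) : Prop :=
  [/\ measurable A, A `<=` S, (0 < leb2 R A)%E & (leb2 R A < +oo)%E].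

Definition Lavg d (Omega : measurableType d) (R : realType)
  (D : R * R -> Omega -> R) (A : set (R * R)) : Omega -> R :=
  fun w => (fine (leb2 R A))^-1 * Rintegral (leb2 R) A (fun s => D s w).

Definition R1 d (Omega : measurableType d) (R : realType)
  (P : probability Omega R) (D : R * R -> Omega -> R) (A : set (R * R)) : \bar R :=
  'V_P[Lavg D A].

(* Main.v *)
Require Import Defs.
From HB Require Import structures.
From mathcomp Require Import all_boot all_order all_algebra.
From mathcomp Require Import all_classical all_reals all_analysis.
From mathcomp Require Import measurable_realfun ring lra.
Import Order.TTheory GRing.Theory Num.Theory.
Import numFieldNormedType.Exports.
Set Implicit Arguments. Unset Strict Implicit. Unset Printing Implicit Defensive.
Local Open Scope classical_set_scope.
Local Open Scope ring_scope.

HB.instance Definition _ (R : realType) := Measure.on (leb2 R).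
Lemma leb2_sigma_finite (R : realType) : sigma_finite setT (leb2 R).
Proof.
have /sigma_finiteP[F [TF ndF Foo]] := sigma_finiteT (@lebesgue_measure R).
exists (fun n => F n `*` F n).
  rewrite -setXTT TF predeqE => -[x y]; split.
    move=> [/= [n _ Fnx] [k _ Gky]]; exists (maxn n k) => //; split.
    - by move: x Fnx; exact/subsetPset/ndF/leq_maxl.
    - by move: y Gky; exact/subsetPset/ndF/leq_maxr.
  by move=> [n _ []/= ? ?]; split; exists n.
move=> k; have [? ?] := Foo k.
split; first exact: measurableX.
by rewrite /leb2 product_measure1E// lte_mul_pinfty// ge0_fin_numE.
Qed.
HB.instance Definition _ (R : realType) :=
  Measure_isSigmaFinite.Build _ _ _ (leb2 R) (leb2_sigma_finite R).

Section pfm.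
Local Open Scope ereal_scope.
Context d1 d2 (T1 : measurableType d1) (T2 : measurableType d2) (R : realType).
Variables (m : {measure set T1 -> \bar R}) (f : T1 -> T2).
Hypothesis mf : measurable_fun [set: T1] f.
Definition pfm of measurable_fun [set: T1] f := pushforward m f.
Let pfm0 : pfm mf set0 = 0.
Proof. by rewrite /pfm /pushforward preimage_set0 measure0. Qed.
Let pfm_ge0 A : 0 <= pfm mf A.
Proof. exact: measure_ge0. Qed.
Let pfm_sigma_additive : semi_sigma_additive (pfm mf).
Proof.
move=> F mF tF mUF; rewrite /pfm /pushforward preimage_bigcup.
apply: measure_semi_sigma_additive.
- by move=> n; rewrite -[X in measurable X]setTI; exact: mf.
- apply/trivIsetP => /= i j _ _ ij; rewrite -preimage_setI.
  by move/trivIsetP : tF => /(_ _ _ _ _ ij) ->//; rewrite preimage_set0.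
- by rewrite -preimage_bigcup -[X in measurable X]setTI; exact: mf.
Qed.
HB.instance Definition _ := isMeasure.Build _ _ _ (pfm mf) pfm0 pfm_ge0 pfm_sigma_additive.
End pfm.

Section shift.
Context (R : realType).

Lemma mshift1 (c : R) : measurable_fun [set: measurableTypeR R]
  ((fun x : R => x + c) : measurableTypeR R -> measurableTypeR R).
Proof. exact: measurable_funD. Qed.

Lemma leb_shift (c : R) (A : set R) : measurable A ->
  lebesgue_measure ((fun x => x + c) @^-1` A) = lebesgue_measure A.
Proof.
move=> mA.
have := @lebesgue_measure_unique R (pfm lebesgue_measure (mshift1 c)) _ A mA.
move=> ->//.
move=> X /ocitvP [->|[[a b]/= ab ->]]; first by rewrite !measure0.
rewrite /pfm /pushforward /=.
have -> : (fun x => x + c) @^-1` `]a, b]%classic = `](a - c), (b - c)]%classic.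
  apply/seteqP; split => x /=; rewrite !in_itv/= => /andP[h1 h2]; apply/andP; split.
  - by rewrite ltrBlDr.
  - by rewrite lerBrDr.
  - by rewrite -ltrBlDr.
  - by rewrite -lerBrDr.
rewrite !lebesgue_measure_itv/= !lte_fin ab ltrD2r ab.
by rewrite -!EFinB; congr (EFin _); lra.
Qed.

Local Notation RR := (measurableTypeR R * measurableTypeR R)%type.
Lemma mshift2 (v : R * R) : measurable_fun [set: RR] ((fun p : R * R => p + v) : RR -> RR).
Proof.
apply/measurable_fun_pairP; split.
- exact: (measurable_funD measurable_fst (measurable_cst v.1)).
- exact: (measurable_funD measurable_snd (measurable_cst v.2)).
Qed.

Lemma leb2_shift (v : R * R) (A : set (R * R)) : measurable A ->
  leb2 R ((fun p => p + v) @^-1` A) = leb2 R A.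
Proof.
move=> mA.
have := @product_measure_unique _ _ _ _ R lebesgue_measure lebesgue_measure
  (pfm (leb2 R) (mshift2 v)) _ A mA.
rewrite -/(leb2 R) => ->//.
move=> A1 A2 mA1 mA2; rewrite /pfm /pushforward /=.
have -> : (fun p => p + v) @^-1` (A1 `*` A2) =
    ((fun x => x + v.1) @^-1` A1) `*` ((fun x => x + v.2) @^-1` A2).
  by apply/seteqP; split => -[x y].
rewrite /leb2 product_measure1E.
- by congr (_ * _)%E; exact: leb_shift.
- by have := mshift1 v.1 measurableT mA1; rewrite setTI.
- by have := mshift1 v.2 measurableT mA2; rewrite setTI.
Qed.

Lemma translateE (A : set (R * R)) v :
  translate A v = (fun p => p + (- v)) @^-1` A.
Proof.
apply/seteqP; split => [p [a Aa <-]|p /= Ap] /=.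
  by rewrite addrK.
by exists (p - v) => //; rewrite subrK.
Qed.

Lemma measurable_translate (A : set (R * R)) v : measurable A ->
  measurable (translate A v).
Proof.
by move=> mA; rewrite translateE -[X in measurable X]setTI; exact: mshift2.
Qed.

Lemma leb2_translate (A : set (R * R)) v : measurable A ->
  leb2 R (translate A v) = leb2 R A.
Proof. by move=> mA; rewrite translateE leb2_shift. Qed.

Lemma integral_translate (A : set (R * R)) v (f : R * R -> \bar R) :
  measurable A -> measurable_fun (translate A v) f ->
  (forall x, translate A v x -> (0 <= f x)%E) ->
  (\int[leb2 R]_(s in translate A v) f s =
   \int[leb2 R]_(s in A) f ((s : R * R) + v)%R)%E.
Proof.
move=> mA mf f0.
have mT := measurable_translate v mA.
rewrite (@eq_measure_integral _ _ _ _ (pfm (leb2 R) (mshift2 v))); last first.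
  by move=> B mB _; rewrite /pfm /pushforward /=; exact/esym/leb2_shift.
rewrite ge0_integral_pushforward//; last by move=> y /set_mem; exact: f0.
have -> // : (fun p => p + v) @^-1` translate A v = A.
apply/seteqP; split => [p /= [a Aa] /addIr <-//|p Ap /=].
by exists p.
exact: mshift2.
Qed.

End shift.


Section tonelli.
Local Open Scope ereal_scope.
Context d (Omega : measurableType d) (R : realType) (P : probability Omega R).

Lemma swapPL (h : R * R -> Omega -> \bar R) :
  measurable_fun [set: (R * R) * Omega] (fun p => h p.1 p.2) ->
  (forall s w, 0 <= h s w) ->
  \int[P]_w \int[leb2 R]_s h s w = \int[leb2 R]_s \int[P]_w h s w.
Proof.
move=> mh h0.
have := @fubini_tonelli _ _ _ _ R (leb2 R) P (fun p => h p.1 p.2) mh (fun p => h0 _ _).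
by rewrite /fubini_F /fubini_G /= => ->.
Qed.

Lemma measurable_intL (h : R * R -> Omega -> \bar R) :
  measurable_fun [set: (R * R) * Omega] (fun p => h p.1 p.2) ->
  (forall s w, 0 <= h s w) ->
  measurable_fun [set: Omega] (fun w => \int[leb2 R]_s h s w).
Proof.
move=> mh h0.
exact: (@measurable_fun_fubini_tonelli_G _ _ _ _ R (leb2 R) (fun p => h p.1 p.2) mh (fun p => h0 _ _)).
Qed.

End tonelli.

Section moments.
Local Open Scope ereal_scope.
Context d (Omega : measurableType d) (R : realType) (P : probability Omega R).

Definition pY (Y : R * R -> Omega -> R) (A : set (R * R)) (s : R * R) (w : Omega) : \bar R :=
  if s \in A then (Y s w)%:E else 0.
Definition MA (Y : R * R -> Omega -> R) (A : set (R * R)) (w : Omega) : \bar R :=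
  \int[leb2 R]_s pY Y A s w.

Variables (Y : R * R -> Omega -> R) (A : set (R * R)).
Hypothesis Y0 : forall s w, (0 <= Y s w)%R.
Hypothesis mY : measurable_fun [set: (R * R) * Omega] (fun p => pY Y A p.1 p.2).

Lemma pY_ge0 s w : 0 <= pY Y A s w.
Proof. by rewrite /pY; case: ifP => // _; rewrite lee_fin. Qed.

Lemma MA_ge0 w : 0 <= MA Y A w.
Proof. by apply: integral_ge0 => s _; exact: pY_ge0. Qed.

Lemma measurable_MA : measurable_fun [set: Omega] (MA Y A).
Proof. exact: measurable_intL mY pY_ge0. Qed.

Lemma mY1 s : measurable_fun [set: Omega] (pY Y A s).
Proof.
have := measurableT_comp mY (measurable_fun_pair (measurable_cst s) (@measurable_id _ Omega setT)).
by [].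
Qed.

Lemma mY2 w : measurable_fun [set: R * R] (fun s => pY Y A s w).
Proof.
have := measurableT_comp mY (measurable_fun_pair (@measurable_id _ (R * R)%type setT) (measurable_cst w)).
by [].
Qed.

Lemma EMA : \int[P]_w MA Y A w = \int[leb2 R]_s \int[P]_w pY Y A s w.
Proof. exact: swapPL mY pY_ge0. Qed.

Lemma EMA2 : \int[P]_w (MA Y A w * MA Y A w) =
  \int[leb2 R]_s \int[leb2 R]_t \int[P]_w (pY Y A s w * pY Y A t w).
Proof.
transitivity (\int[P]_w \int[leb2 R]_s (pY Y A s w * MA Y A w)).
  apply: eq_integral => w _.
  by rewrite ge0_integralZr//; [exact: mY2| move=> s _; exact: pY_ge0 | exact: MA_ge0].
rewrite swapPL; last 2 first.
- apply: emeasurable_funM => //.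
  exact: (measurableT_comp measurable_MA measurable_snd).
- by move=> s w; rewrite mule_ge0 ?pY_ge0 ?MA_ge0.
apply: eq_integral => s _.
transitivity (\int[P]_w \int[leb2 R]_t (pY Y A s w * pY Y A t w)).
  apply: eq_integral => w _.
  by rewrite ge0_integralZl//; [exact: mY2| move=> t _; exact: pY_ge0 | exact: pY_ge0].
rewrite swapPL//; last first.
- by move=> t w; rewrite mule_ge0 ?pY_ge0.
apply: emeasurable_funM => //.
exact: (measurableT_comp (mY1 s) measurable_snd).
Qed.

End moments.


Section law.
Local Open Scope ereal_scope.
Context d (Omega : measurableType d) (R : realType) (P : probability Omega R).
Variables (S : set (R * R)) (X : R * R -> Omega -> R).
Hypothesis hX : forall s, S s -> measurable_fun [set: Omega] (X s).
Hypothesis hst : stationary P S X.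

Lemma rect2 (s t v : R * R) (A B : set R) : S s -> S t -> S (s + v)%R -> S (t + v)%R ->
  measurable A -> measurable B ->
  P [set w | A (X (s + v)%R w) /\ B (X (t + v)%R w)] =
  P [set w | A (X s w) /\ B (X t w)].
Proof.
move=> Ss St Ssv Stv mA mB.
pose ss := fun i : 'I_2 => if val i == 0%N then s else t.
pose BB := fun i : 'I_2 => if val i == 0%N then A else B.
have := @hst 2%N ss v BB.
have -> : [set w | A (X (s + v)%R w) /\ B (X (t + v)%R w)] =
    \bigcap_(i in [set: 'I_2]) [set w | BB i (X (ss i + v)%R w)].
  apply/seteqP; split => w /=.
  - by move=> [hA hB] [[|[|//]]] /=.
  - move=> H; split.
    + by have := H ord0 I.
    + by have := H (@Ordinal 2 1 isT) I.
have -> : [set w | A (X s w) /\ B (X t w)] =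
    \bigcap_(i in [set: 'I_2]) [set w | BB i (X (ss i) w)].
  apply/seteqP; split => w /=.
  - by move=> [hA hB] [[|[|//]]] /=.
  - move=> H; split.
    + by have := H ord0 I.
    + by have := H (@Ordinal 2 1 isT) I.
move=> ->//.
- by move=> [[|[|//]]].
- by move=> [[|[|//]]].
- by move=> [[|[|//]]].
Qed.

Lemma law2 (s t v : R * R) (h : R * R -> \bar R) :
  S s -> S t -> S (s + v)%R -> S (t + v)%R ->
  measurable_fun [set: (R * R)%type] h -> (forall z, 0 <= h z) ->
  \int[P]_w h (X (s + v)%R w, X (t + v)%R w) = \int[P]_w h (X s w, X t w).
Proof.
move=> Ss St Ssv Stv mh h0.
have m1 : measurable_fun [set: Omega] (fun w => (X s w, X t w)).
  exact: measurable_fun_pair (hX Ss) (hX St).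
have m2 : measurable_fun [set: Omega] (fun w => (X (s + v)%R w, X (t + v)%R w)).
  exact: measurable_fun_pair (hX Ssv) (hX Stv).
have E1 : \int[P]_w h (X s w, X t w) = \int[pfm P m1]_y h y.
  by rewrite /pfm ge0_integral_pushforward// ?preimage_setT.
have E2 : \int[P]_w h (X (s + v)%R w, X (t + v)%R w) = \int[pfm P m2]_y h y.
  by rewrite /pfm ge0_integral_pushforward// ?preimage_setT.
rewrite E1 E2; apply: eq_measure_integral => C mC _.
apply: (measure_unique _ (fun=> setT) (measurable_prod_measurableType _ _)) => //.
- move=> _ _ [A1 mA1 [B1 mB1 <-]] [A2 mA2 [B2 mB2 <-]].
  rewrite -setXI; exists (A1 `&` A2); first exact: measurableI.
  by exists (B1 `&` B2) => //; exact: measurableI.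
- by move=> _; exists setT => //; exists setT => //; rewrite setXTT.
- by rewrite bigcup_const.
- move=> _ [A1 mA1 [B1 mB1 <-]].
  rewrite /pfm /pushforward /=.
  exact: rect2.
- by move=> _; rewrite /pfm /pushforward /= probability_setT ltry.
Qed.

End law.


Section var.
Local Open Scope ereal_scope.
Context d (Omega : measurableType d) (R : realType) (P : probability Omega R).

Lemma Lfun2_of (Z : Omega -> R) : measurable_fun [set: Omega] Z ->
  \int[P]_w ((Z w ^+ 2)%:E) < +oo -> Z \in Lfun P 2%:E.
Proof.
move=> mZ fin; rewrite inE; apply/andP; split; first by rewrite inE.
rewrite inE/= /finite_norm unlock /Lnorm poweR_lty//.
rewrite (le_lt_trans _ fin)// le_eqVlt; apply/orP; left; apply/eqP; apply: eq_integral => x _.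
by rewrite /= powR_mulrn// real_normK ?num_real.
Qed.

Lemma ae_fin (M : Omega -> \bar R) : measurable_fun [set: Omega] M ->
  (forall w, 0 <= M w) -> \int[P]_w (M w * M w) < +oo ->
  {ae P, forall w, M w \is a fin_num}.
Proof.
move=> mM M0 fin.
have ih : P.-integrable [set: Omega] (fun w => M w * M w).
  apply/integrableP; split; first exact: emeasurable_funM.
  by under eq_integral => w _ do rewrite gee0_abs ?mule_ge0//.
apply: filterS (integrable_ae measurableT ih) => w /(_ I).
by move: (M0 w); case: (M w).
Qed.

Lemma var_ae (Z Z' : Omega -> R) : measurable_fun [set: Omega] Z ->
  measurable_fun [set: Omega] Z' -> {ae P, forall w, Z w = Z' w} ->
  'V_P[Z] = 'V_P[Z'].
Proof.
move=> mZ mZ' hae.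
have EE : \int[P]_w (Z w)%:E = \int[P]_w (Z' w)%:E.
  apply: ae_eq_integral => //; try exact/measurable_EFinP.
  by apply: filterS hae => w hw _ /=; rewrite hw.
rewrite /variance !unlock EE.
apply: ae_eq_integral => //.
- apply/measurable_EFinP; apply: measurable_funM; apply: measurable_funB => //.
- apply/measurable_EFinP; apply: measurable_funM; apply: measurable_funB => //.
  apply: filterS hae => w hw _; set c := fine _.
  by change (((Z w - c) * (Z w - c))%:E = ((Z' w - c) * (Z' w - c))%:E); rewrite hw.
Qed.

Lemma varM (M : Omega -> \bar R) (c : R) : measurable_fun [set: Omega] M ->
  (forall w, 0 <= M w) -> \int[P]_w (M w * M w) < +oo -> (0 <= c)%R ->
  'V_P[fun w => c * fine (M w)]%R =
  (c ^+ 2)%:E * \int[P]_w (M w * M w) - (c%:E * \int[P]_w M w) ^+ 2.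
Proof.
move=> mM M0 fin c0.
have hae := ae_fin mM M0 fin.
have mfM : measurable_fun [set: Omega] (fun w => fine (M w)).
  exact: measurableT_comp.
have E2 : \int[P]_w ((fine (M w)) ^+ 2)%:E = \int[P]_w (M w * M w).
  apply: ae_eq_integral => //.
  - by apply/measurable_EFinP; exact: measurable_funX.
  - exact: emeasurable_funM.
  - by apply: filterS hae => w h _; rewrite expr2 EFinM fineK.
have E1 : \int[P]_w (fine (M w))%:E = \int[P]_w M w.
  apply: ae_eq_integral => //.
  - exact/measurable_EFinP.
  - by apply: filterS hae => w h _; rewrite fineK.
have mZ : measurable_fun [set: Omega] (fun w => c * fine (M w))%R.
  exact: measurable_funM.
have Zsq : \int[P]_w (((c * fine (M w)) ^+ 2)%R)%:E =
    (c ^+ 2)%:E * \int[P]_w (M w * M w).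
  under eq_integral => w _ do rewrite exprMn EFinM.
  rewrite ge0_integralZl_EFin//; first by rewrite E2.
  - by move=> w _; rewrite lee_fin sqr_ge0.
  - by apply/measurable_EFinP; exact: measurable_funX.
  - exact: sqr_ge0.
have Zfin : \int[P]_w (((c * fine (M w)) ^+ 2)%R)%:E < +oo.
  by rewrite Zsq lte_mul_pinfty// lee_fin sqr_ge0.
rewrite varianceE; last exact: Lfun2_of.
rewrite !unlock.
congr (_ - _).
  rewrite -Zsq; apply: eq_integral => w _.
  by rewrite /= expr2.
congr (_ ^+ 2).
under eq_integral => w _ do rewrite EFinM.
by rewrite ge0_integralZl_EFin// ?E1//; [move=> w _; rewrite lee_fin fine_ge0| exact/measurable_EFinP].
Qed.

Lemma Lfun2_cM (M : Omega -> \bar R) (c : R) : measurable_fun [set: Omega] M ->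
  (forall w, 0 <= M w) -> \int[P]_w (M w * M w) < +oo ->
  (fun w => c * fine (M w))%R \in Lfun P 2%:E.
Proof.
move=> mM M0 fin.
have hae := ae_fin mM M0 fin.
have mfM : measurable_fun [set: Omega] (fun w => fine (M w)).
  exact: measurableT_comp.
apply: Lfun2_of; first exact: measurable_funM.
apply: (@le_lt_trans _ _ (\int[P]_w ((c ^+ 2)%:E * (M w * M w)))).
  apply: ge0_le_integral => //.
  - by move=> w _; rewrite lee_fin sqr_ge0.
  - by apply/measurable_EFinP; apply: measurable_funX; exact: measurable_funM.
  - by apply: emeasurable_funM => //; exact: emeasurable_funM.
  - move=> w _; move: (M0 w); case: (M w) => [r|_|//] /=.
    + by move=> _; rewrite -!EFinM lee_fin exprMn expr2.
    + by rewrite mulr0 expr0n /=; apply: mule_ge0; rewrite ?lee_fin ?sqr_ge0.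
rewrite ge0_integralZl_EFin ?sqr_ge0// ?lte_mul_pinfty ?lee_fin ?sqr_ge0//.
- by move=> w _; rewrite mule_ge0.
- exact: emeasurable_funM.
Qed.

End var.


Section comb.
Local Open Scope ereal_scope.
Context d (Omega : measurableType d) (R : realType) (P : probability Omega R).

Lemma var_comb (X1 X2 : Omega -> R) (a b : R) :
  X1 \in Lfun P 2%:E -> X2 \in Lfun P 2%:E -> (0 <= a)%R -> (0 <= b)%R ->
  (a + b = 1)%R ->
  'V_P[fun w => a * X1 w + b * X2 w]%R <= 'V_P[X1] + 'V_P[X2].
Proof.
move=> L1 L2 a0 b0 ab.
have Pfin : P setT \is a fin_num := fin_num_measure P _ measurableT.
have X11 := Lfun_subset12 Pfin L1.
have X21 := Lfun_subset12 Pfin L2.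
have X12 := Lfun2_mul_Lfun1 L1 L2.
have aL1 : (a \o* X1)%R \in Lfun P 2%:E by rewrite Lfun_scale// ler1n.
have bL2 : (b \o* X2)%R \in Lfun P 2%:E by rewrite Lfun_scale// ler1n.
have -> : (fun w => a * X1 w + b * X2 w)%R = ((a \o* X1) \+ (b \o* X2))%R.
  by apply: boolp.funext => w /=; rewrite mulrC [(b * _)%R]mulrC.
have bX21 := Lfun_subset12 Pfin bL2.
have X1bX2 := Lfun2_mul_Lfun1 L1 bL2.
rewrite varianceD// !varianceZ// covarianceZl//.
  rewrite covarianceZr//.
  have h := @variance_ge0 _ _ _ P (X1 \- X2)%R.
  rewrite varianceB// in h.
  move: h.
  rewrite -(fineK (variance_fin_num L1)) -(fineK (variance_fin_num L2)).
  rewrite -(fineK (covariance_fin_num X11 X21 X12)).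
  set v1 := fine _; set v2 := fine _; set cv := fine _.
  rewrite -!EFinM -?EFinN -!EFinD -?EFinB !lee_fin => h.
  have v10 : (0 <= v1)%R by rewrite /v1 fine_ge0// variance_ge0.
  have v20 : (0 <= v2)%R by rewrite /v2 fine_ge0// variance_ge0.
  have -> : b = (1 - a)%R by lra.
  have a1 : (0 <= 1 - a)%R by lra.
  have p1 : (0 <= a * (1 - a) * (v1 + v2 - 2 * cv))%R.
    by rewrite !mulr_ge0//; lra.
  have p2 : (0 <= (1 - a) * v1)%R by rewrite mulr_ge0.
  have p3 : (0 <= a * v2)%R by rewrite mulr_ge0.
  nra.
Qed.

End comb.


Section nmle.
Local Open Scope ereal_scope.
Context d (T : measurableType d) (R : realType) (mu : {measure set T -> \bar R}).
Lemma le_integral_nm (f1 f2 : T -> \bar R) : (forall x, 0 <= f1 x) ->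
  (forall x, f1 x <= f2 x) -> \int[mu]_x f1 x <= \int[mu]_x f2 x.
Proof.
move=> f10 f12.
rewrite !ge0_integralTE//; last by move=> x; exact: le_trans (f10 x) (f12 x).
apply: ereal_sup_le => _ [h hf1 <-]; exists h => //= x.
exact: le_trans (hf1 x) (f12 x).
Qed.
End nmle.

Section gen.
Local Open Scope ereal_scope.
Context d (Omega : measurableType d) (R : realType) (P : probability Omega R).

Lemma mpY (Y : R * R -> Omega -> R) (A : set (R * R)) : measurable A ->
  measurable_fun (A `*` [set: Omega]) (fun p => (Y p.1 p.2)%:E) ->
  measurable_fun [set: (R * R) * Omega] (fun p => pY Y A p.1 p.2).
Proof.
move=> mA hY.
have [+ _] := measurable_restrict (fun p : (R * R) * Omega => (Y p.1 p.2)%:E)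
  (measurableX mA (@measurableT _ Omega)) (@measurableT _ ((R * R) * Omega)%type).
rewrite setTI => /(_ hY).
suff -> : (fun p => pY Y A p.1 p.2) =
    ((fun p : (R * R) * Omega => (Y p.1 p.2)%:E) \_ (A `*` [set: Omega])) by [].
apply/funext => -[s w]; rewrite /pY patchE in_setX in_setT andbT.
by [].
Qed.

Lemma sec_meas (Y : R * R -> Omega -> R) (A : set (R * R)) (w : Omega) :
  measurable A ->
  measurable_fun [set: (R * R) * Omega] (fun p => pY Y A p.1 p.2) ->
  measurable_fun A (fun s => (Y s w)%:E).
Proof.
move=> mA hY.
have := measurable_funS measurableT (@subsetT _ A) (mY2 hY w).
apply: eq_measurable_fun => s /set_mem sA.
by rewrite /pY (mem_set sA).
Qed.

Lemma MA_E (Y : R * R -> Omega -> R) (A : set (R * R)) (w : Omega) :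
  \int[leb2 R]_(s in A) (Y s w)%:E = MA Y A w.
Proof.
rewrite integral_mkcond /MA; apply: eq_integral => s _.
by rewrite patchE /pY.
Qed.

Lemma LavgE (Y : R * R -> Omega -> R) (A : set (R * R)) :
  Lavg Y A = (fun w => (fine (leb2 R A))^-1 * fine (MA Y A w))%R.
Proof.
by apply/funext => w; rewrite /Lavg /Rintegral MA_E.
Qed.

End gen.

Section main.
Local Open Scope ereal_scope.
Context d (Omega : measurableType d) (R : realType) (P : probability Omega R).
Variables (S : set (R * R)) (X : R * R -> Omega -> R) (g : R -> R).
Hypothesis mS : measurable S.
Hypothesis hX : forall s, S s -> measurable_fun [set: Omega] (X s).
Hypothesis hst : stationary P S X.
Hypothesis mg : measurable_fun [set: R] g.
Hypothesis g0 : forall x, (0 <= g x)%R.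
Hypothesis mj : measurable_fun (S `*` [set: Omega])
  (fun p : (R * R) * Omega => g (X p.1 p.2)).
Hypothesis hsq : forall s, S s -> \int[P]_w ((g (X s w)) ^+ 2)%:E < +oo.

Let D := fun s w => g (X s w).

Lemma D0 s w : (0 <= D s w)%R. Proof. exact: g0. Qed.

Lemma mjD (A : set (R * R)) : measurable A -> A `<=` S ->
  measurable_fun [set: (R * R) * Omega] (fun p => pY D A p.1 p.2).
Proof.
move=> mA AS; apply: mpY => //.
apply/measurable_EFinP.
apply: measurable_funS mj => //.
- exact: measurableX.
- by move=> [s w] [/= /AS].
Qed.

Lemma sq_const s s0 : S s -> S s0 ->
  \int[P]_w ((D s w) ^+ 2)%:E = \int[P]_w ((D s0 w) ^+ 2)%:E.
Proof.
move=> Ss Ss0.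
have mh : measurable_fun [set: (R * R)%type] (fun z : R * R => ((g z.1) ^+ 2)%:E).
  apply/measurable_EFinP; apply: measurable_funX.
  exact: measurableT_comp mg measurable_fst.
have E : (s0 + (s - s0))%R = s by rewrite addrC subrK.
have := @law2 _ _ _ P S X hX hst s0 s0 (s - s0)%R _ Ss0 Ss0 _ _ mh.
rewrite E => /(_ Ss Ss) -> //.
by move=> z; rewrite lee_fin sqr_ge0.
Qed.

Lemma K_bound s t s0 : S s -> S t -> S s0 ->
  \int[P]_w (D s w * D t w)%:E <=
  \int[P]_w ((D s0 w) ^+ 2)%:E + \int[P]_w ((D s0 w) ^+ 2)%:E.
Proof.
move=> Ss St Ss0.
rewrite -{1}(sq_const Ss Ss0) -(sq_const St Ss0).
rewrite -ge0_integralD//; last 4 first.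
- by move=> w _; rewrite lee_fin sqr_ge0.
- by apply/measurable_EFinP; apply: measurable_funX; exact: measurableT_comp mg (hX Ss).
- by move=> w _; rewrite lee_fin sqr_ge0.
- by apply/measurable_EFinP; apply: measurable_funX; exact: measurableT_comp mg (hX St).
apply: ge0_le_integral => //.
- by move=> w _; rewrite lee_fin mulr_ge0 ?D0.
- by apply/measurable_EFinP; apply: measurable_funM; exact: measurableT_comp mg (hX _).
- apply/measurable_EFinP; apply: measurable_funD; apply: measurable_funX;
    exact: measurableT_comp mg (hX _).
- move=> w _; rewrite lee_fin.
  have := D0 s w; have := D0 t w; nra.
Qed.

Lemma EMA2_fin (A : set (R * R)) s0 : measurable A -> A `<=` S ->
  leb2 R A < +oo -> S s0 ->
  \int[P]_w (MA D A w * MA D A w) < +oo.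
Proof.
move=> mA AS Afin Ss0.
set k := \int[P]_w ((D s0 w) ^+ 2)%:E + \int[P]_w ((D s0 w) ^+ 2)%:E.
have k0 : 0 <= k by rewrite adde_ge0// integral_ge0// => w _; rewrite lee_fin sqr_ge0.
have kfin : k < +oo by rewrite lte_add_pinfty// hsq.
have pYD0 := @pY_ge0 _ Omega R D A D0.
rewrite (EMA2 P D0 (mjD mA AS)).
have cstA (c : \bar R) : \int[leb2 R]_t (if t \in A then c else 0) = c * leb2 R A.
  rewrite (_ : (fun t => if t \in A then c else 0) = (cst c \_ A)).
    by rewrite -integral_mkcond integral_cst.
  by apply/funext => t; rewrite patchE.
have H1 : \int[leb2 R]_s \int[leb2 R]_t \int[P]_w (pY D A s w * pY D A t w) <=
    \int[leb2 R]_s (if s \in A then k * leb2 R A else 0).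
  apply: le_integral_nm.
    move=> s; apply: integral_ge0 => t _; apply: integral_ge0 => w _.
    exact: mule_ge0.
  move=> s; case sA: (s \in A); last first.
    rewrite (_ : (fun t => _) = (fun t => 0)); first by rewrite integral0.
    apply/funext => t; rewrite (_ : (fun w => _) = (fun w => 0)) ?integral0//.
    by apply/funext => w; rewrite /pY sA mul0e.
  rewrite -cstA; apply: le_integral_nm.
    by move=> t; apply: integral_ge0 => w _; exact: mule_ge0.
  move=> t; case tA: (t \in A); last first.
    rewrite (_ : (fun w => _) = (fun w => 0)) ?integral0//.
    by apply/funext => w; rewrite /pY tA mule0.
  rewrite /pY sA tA.
  under eq_integral do rewrite -EFinM.
  apply: K_bound => //.
  - by apply: AS; move/set_mem: sA.
  - by apply: AS; move/set_mem: tA.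
have H2 : \int[leb2 R]_s (if s \in A then k * leb2 R A else 0) < +oo.
  rewrite cstA lte_mul_pinfty//.
  - by rewrite mule_ge0.
  - by rewrite fin_numM// ge0_fin_numE.
exact: le_lt_trans H1 H2.
Qed.

Lemma shiftK v s t : S s -> S t -> S (s + v)%R -> S (t + v)%R ->
  \int[P]_w (D (s + v)%R w * D (t + v)%R w)%:E = \int[P]_w (D s w * D t w)%:E.
Proof.
move=> Ss St Ssv Stv.
have mh : measurable_fun [set: (R * R)%type] (fun z : R * R => (g z.1 * g z.2)%:E).
  apply/measurable_EFinP; apply: measurable_funM.
  - exact: measurableT_comp mg measurable_fst.
  - exact: measurableT_comp mg measurable_snd.
have := @law2 _ _ _ P S X hX hst s t v _ Ss St Ssv Stv mh.
by move=> -> // z; rewrite lee_fin mulr_ge0.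
Qed.

Lemma shiftm v s : S s -> S (s + v)%R ->
  \int[P]_w (D (s + v)%R w)%:E = \int[P]_w (D s w)%:E.
Proof.
move=> Ss Ssv.
have mh : measurable_fun [set: (R * R)%type] (fun z : R * R => (g z.1)%:E).
  apply/measurable_EFinP; exact: measurableT_comp mg measurable_fst.
have := @law2 _ _ _ P S X hX hst s s v _ Ss Ss Ssv Ssv mh.
by move=> -> // z; rewrite lee_fin.
Qed.

Lemma region_pt A : region S A -> exists s0, S s0.
Proof.
case=> mA AS A0 _.
have : A !=set0.
  apply/set0P/eqP => A0'; move: A0; rewrite A0' measure0.
  by rewrite ltxx.
by case=> s0 /AS Ss0; exists s0.
Qed.

Lemma part1 A v : region S A -> translate A v `<=` S ->
  R1 P D (translate A v) = R1 P D A.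
Proof.
move=> rA TS; have [s0 Ss0] := region_pt rA.
case: rA => mA AS A0 Afin.
pose D' := fun s w => D (s + v)%R w.
have D'0 s w : (0 <= D' s w)%R by exact: D0.
have AvS s : A s -> S (s + v)%R by move=> As; apply: TS; exists s.
have mT := measurable_translate v mA.
have mjD' : measurable_fun [set: (R * R) * Omega] (fun p => pY D' A p.1 p.2).
  apply: mpY => //; apply/measurable_EFinP.
  have -> : (fun p : (R * R) * Omega => D' p.1 p.2) =
      (fun q : (R * R) * Omega => g (X q.1 q.2)) \o (fun p => (p.1 + v, p.2))%R.
    by [].
  apply: (measurable_comp (F := S `*` [set: Omega])) => //.
  - exact: measurableX.
  - by move=> _ [[s w] [/= As _] <-]; split => //=; exact: AvS.
  - apply: (measurable_funS measurableT (@subsetT _ _)).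
    apply: measurable_fun_pair.
    * apply/measurable_fun_pairP; split.
      - exact: (measurable_funD (measurableT_comp measurable_fst measurable_fst) (measurable_cst v.1)).
      - exact: (measurable_funD (measurableT_comp measurable_snd measurable_fst) (measurable_cst v.2)).
    * exact: measurable_snd.
have ME w : MA D (translate A v) w = MA D' A w.
  rewrite -!MA_E integral_translate//.
  - exact: sec_meas mT (mjD mT TS).
  - by move=> x _; rewrite lee_fin D0.
rewrite /R1 !LavgE leb2_translate//.
have -> : (fun w => (fine (leb2 R A))^-1 * fine (MA D (translate A v) w))%R =
    (fun w => (fine (leb2 R A))^-1 * fine (MA D' A w))%R.
  by apply/funext => w; rewrite ME.
have fin := EMA2_fin mA AS Afin Ss0.
have c0 : (0 <= (fine (leb2 R A))^-1)%R by rewrite invr_ge0 fine_ge0.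
have E2 : \int[P]_w (MA D' A w * MA D' A w) = \int[P]_w (MA D A w * MA D A w).
  rewrite (EMA2 P D'0 mjD') (EMA2 P D0 (mjD mA AS)).
  apply: eq_integral => s _; apply: eq_integral => t _.
  case sA: (s \in A); last first.
    by rewrite /pY sA; under eq_integral do rewrite mul0e; under [RHS]eq_integral do rewrite mul0e.
  case tA: (t \in A); last first.
    by rewrite /pY tA; under eq_integral do rewrite mule0; under [RHS]eq_integral do rewrite mule0.
  rewrite /pY sA tA.
  under eq_integral do rewrite -EFinM.
  under [RHS]eq_integral do rewrite -EFinM.
  move/set_mem: sA => sA; move/set_mem: tA => tA.
  exact: shiftK (AS _ sA) (AS _ tA) (AvS _ sA) (AvS _ tA).
have E1 : \int[P]_w MA D' A w = \int[P]_w MA D A w.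
  rewrite (EMA P D'0 mjD') (EMA P D0 (mjD mA AS)).
  apply: eq_integral => s _.
  case sA: (s \in A); last by rewrite /pY sA.
  rewrite /pY sA.
  move/set_mem: sA => sA.
  exact: shiftm (AS _ sA) (AvS _ sA).
have mM' : measurable_fun [set: Omega] (MA D' A) by exact: measurable_MA D'0 mjD'.
have mM : measurable_fun [set: Omega] (MA D A) by exact: measurable_MA D0 (mjD mA AS).
have M0' : forall w, 0 <= MA D' A w by move=> w; apply: integral_ge0 => s _; rewrite /pY; case: ifP => // _; rewrite lee_fin; exact: D0.
have M0 : forall w, 0 <= MA D A w by move=> w; apply: integral_ge0 => s _; rewrite /pY; case: ifP => // _; rewrite lee_fin; exact: D0.
have fin' : \int[P]_w (MA D' A w * MA D' A w) < +oo by rewrite E2.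
rewrite (@varM _ _ _ P (MA D' A) _ mM' M0' fin' c0).
rewrite (@varM _ _ _ P (MA D A) _ mM M0 fin c0).
by rewrite E1 E2.
Qed.

Lemma part2 A1 A2 : region S A1 -> region S A2 -> A1 `&` A2 = set0 ->
  R1 P D (A1 `|` A2) <= R1 P D A1 + R1 P D A2.
Proof.
move=> r1 r2 dis; have [s0 Ss0] := region_pt r1.
case: r1 => mA1 A1S A10 A1fin; case: r2 => mA2 A2S A20 A2fin.
have mA : measurable (A1 `|` A2) by exact: measurableU.
have AS : A1 `|` A2 `<=` S by move=> x [/A1S|/A2S].
set m1 := fine (leb2 R A1); set m2 := fine (leb2 R A2).
have m1gt0 : (0 < m1)%R by apply: fine_gt0; rewrite A10 A1fin.
have m2gt0 : (0 < m2)%R by apply: fine_gt0; rewrite A20 A2fin.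
have fA : fine (leb2 R (A1 `|` A2)) = (m1 + m2)%R.
  by rewrite measureU// fineD// ge0_fin_numE// ltW.
have pYU s w : pY D (A1 `|` A2) s w = pY D A1 s w + pY D A2 s w.
  rewrite /pY in_setU; case: (boolP (s \in A1)) => s1 /=.
    case: (boolP (s \in A2)) => s2 /=; last by rewrite adde0.
    have : (A1 `&` A2) s by split; exact/set_mem.
    by rewrite dis.
  by case: (s \in A2) => //; rewrite add0e.
have mj1 := mjD mA1 A1S.
have mj2 := mjD mA2 A2S.
have ME w : MA D (A1 `|` A2) w = MA D A1 w + MA D A2 w.
  rewrite /MA; under eq_integral do rewrite pYU.
  rewrite ge0_integralD//.
  - by move=> s _; rewrite /pY; case: ifP => // _; rewrite lee_fin D0.
  - exact: mY2 mj1 w.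
  - by move=> s _; rewrite /pY; case: ifP => // _; rewrite lee_fin D0.
  - exact: mY2 mj2 w.
have fin1 := EMA2_fin mA1 A1S A1fin Ss0.
have fin2 := EMA2_fin mA2 A2S A2fin Ss0.
have mM1 : measurable_fun [set: Omega] (MA D A1) by exact: measurable_MA D0 mj1.
have mM2 : measurable_fun [set: Omega] (MA D A2) by exact: measurable_MA D0 mj2.
have M01 : forall w, 0 <= MA D A1 w.
  by move=> w; apply: integral_ge0 => s _; rewrite /pY; case: ifP => // _; rewrite lee_fin; exact: D0.
have M02 : forall w, 0 <= MA D A2 w.
  by move=> w; apply: integral_ge0 => s _; rewrite /pY; case: ifP => // _; rewrite lee_fin; exact: D0.
have hae1 := ae_fin mM1 M01 fin1.
have hae2 := ae_fin mM2 M02 fin2.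
have L1 := @Lfun2_cM _ _ _ P _ m1^-1 mM1 M01 fin1.
have L2 := @Lfun2_cM _ _ _ P _ m2^-1 mM2 M02 fin2.
rewrite /R1 !LavgE fA.
set a := (m1 / (m1 + m2))%R; set b := (m2 / (m1 + m2))%R.
have mf1 : measurable_fun [set: Omega] (fun w => fine (MA D A1 w)) by exact: measurableT_comp.
have mf2 : measurable_fun [set: Omega] (fun w => fine (MA D A2 w)) by exact: measurableT_comp.
have mf : measurable_fun [set: Omega] (fun w => fine (MA D (A1 `|` A2) w)).
  exact: (measurableT_comp _ (measurable_MA D0 (mjD mA AS))).
rewrite (@var_ae _ _ _ P _ (fun w => a * (m1^-1 * fine (MA D A1 w)) + b * (m2^-1 * fine (MA D A2 w)))%R).
- apply: var_comb => //.
  + by rewrite /a divr_ge0// ltW// addr_gt0.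
  + by rewrite /b divr_ge0// ltW// addr_gt0.
  + by rewrite /a /b -mulrDl divff// gt_eqF// addr_gt0.
- exact: measurable_funM.
- apply: measurable_funD; apply: measurable_funM => //; exact: measurable_funM.
- apply: filterS2 hae1 hae2 => w f1 f2.
  rewrite ME fineD//.
  rewrite /a /b; field.
  by rewrite !gt_eqF// addr_gt0.
Qed.

End main.

Theorem theorem1 (d : measure_display) (Omega : measurableType d) (R : realType)
  (P : probability Omega R) (S : set (R * R)) (X : R * R -> Omega -> R)
  (g : R -> R) :
  measurable S ->
  (forall s, S s -> measurable_fun setT (X s)) ->
  stationary P S X ->
  measurable_fun setT g ->
  (forall x, 0 <= g x) ->
  measurable_fun (S `*` setT) (fun p : (R * R) * Omega => g (X p.1 p.2)) ->
  (forall s, S s -> (\int[P]_w ((g (X s w)) ^+ 2)%:E < +oo)%E) ->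
  let D := fun s w => g (X s w) in
  (forall (A : set (R * R)) (v : R * R),
      region S A -> translate A v `<=` S ->
      R1 P D (translate A v) = R1 P D A) /\
  (forall A1 A2 : set (R * R),
      region S A1 -> region S A2 -> A1 `&` A2 = set0 ->
      (R1 P D (A1 `|` A2) <= R1 P D A1 + R1 P D A2)%E).
Proof.
move=> mS hX hst mg g0 mj hsq D; split.
- move=> A v rA TS.
  exact: (part1 mS hX hst mg g0 mj hsq rA TS).
- move=> A1 A2 r1 r2 dis.
  exact: (part2 mS hX hst mg g0 mj hsq r1 r2 dis).
Qed.
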